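(* Let $H$, $K$ be torsion-free groups, let $H_0$ be a proper malnormal subgroup of $H$, and let $K_0$ be a proper subgroup of $K$ isomorphic to $H_0$. Then, for any amalgamated free product $G=H*_{H_0=K_0}K$ of $H$ and $K$ amalgamating $H_0$ with $K_0$ along any isomorphism between them, we have $\mathrm{Ord}_H(G)=\mathrm{Ord}_{K_0}(K)\cup\{0\}$.
   Context: None of the groups or subgroups is assumed finitely generated. A subgroup $A\leqslant B$ is malnormal if $A^b\cap A=\{1\}$ for all $b\in B\setminus A$. For a group $G$, a subset $S\subseteq G$ and $g\in G$, $\mathrm{Ord}_S(g)=\min\{k\geq 1: g^k\in S\}$ if such $k$ exists and $0$ otherwise; $\mathrm{Ord}_S(G)=\{\mathrm{Ord}_S(g):g\in G\}$ (so $\mathrm{Ord}_{K_0}(K)$ is the set of orders of elements of $K$ in $K_0$). *)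

(* Defs.v *)
From Stdlib Require Import Arith.

Record Group : Type := MkGroup {
  carrier :> Type;
  gmul : carrier -> carrier -> carrier;
  gone : carrier;
  ginv : carrier -> carrier;
  gmul_assoc : forall x y z, gmul x (gmul y z) = gmul (gmul x y) z;
  gmul_1l : forall x, gmul gone x = x;
  gmul_1r : forall x, gmul x gone = x;
  gmul_Vl : forall x, gmul (ginv x) x = gone;
  gmul_Vr : forall x, gmul x (ginv x) = gone
}.

Arguments gmul {g}.
Arguments gone {g}.
Arguments ginv {g}.

Fixpoint gpow {G : Group} (g : G) (n : nat) : G :=
  match n with
  | 0 => gone
  | S m => gmul g (gpow g m)
  end.

Definition torsion_free (G : Group) : Prop :=
  forall (g : G) (n : nat), 1 <= n -> gpow g n = gone -> g = gone.

Definition is_hom {G L : Group} (f : G -> L) : Prop :=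
  forall x y : G, f (gmul x y) = gmul (f x) (f y).

Definition is_subgroup {G : Group} (A : G -> Prop) : Prop :=
  A gone /\ (forall x y, A x -> A y -> A (gmul x y)) /\ (forall x, A x -> A (ginv x)).

Definition proper {G : Group} (A : G -> Prop) : Prop := exists g : G, ~ A g.

Definition conj {G : Group} (x b : G) : G := gmul (ginv b) (gmul x b).

Definition malnormal {G : Group} (A : G -> Prop) : Prop :=
  forall b : G, ~ A b -> forall x : G, A x -> A (conj x b) -> conj x b = gone.

Definition iso_between {H K : Group} (H0 : H -> Prop) (K0 : K -> Prop) (phi : H -> K) : Prop :=
  (forall x, H0 x -> K0 (phi x)) /\
  (forall x y, H0 x -> H0 y -> phi (gmul x y) = gmul (phi x) (phi y)) /\
  (forall x y, H0 x -> H0 y -> phi x = phi y -> x = y) /\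
  (forall y, K0 y -> exists x, H0 x /\ phi x = y).

(* (G, iH, iK) is an amalgamated free product H *_{H0 = K0} K along phi:
   the pushout in the category of groups (universal property). *)
Definition is_amalgam {H K : Group} (H0 : H -> Prop) (K0 : K -> Prop) (phi : H -> K)
  (G : Group) (iH : H -> G) (iK : K -> G) : Prop :=
  is_hom iH /\ is_hom iK /\
  (forall h, H0 h -> iH h = iK (phi h)) /\
  (forall (L : Group) (f : H -> L) (g : K -> L),
     is_hom f -> is_hom g -> (forall h, H0 h -> f h = g (phi h)) ->
     exists u : G -> L, is_hom u /\ (forall h, u (iH h) = f h) /\ (forall k, u (iK k) = g k) /\
       (forall v : G -> L, is_hom v -> (forall h, v (iH h) = f h) -> (forall k, v (iK k) = g k) ->
          forall x, v x = u x)).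

Definition OrdRel {G : Group} (S : G -> Prop) (g : G) (n : nat) : Prop :=
  (1 <= n /\ S (gpow g n) /\ (forall k, 1 <= k -> k < n -> ~ S (gpow g k)))
  \/ (n = 0 /\ forall k, 1 <= k -> ~ S (gpow g k)).

Definition OrdSet {G : Group} (S : G -> Prop) (n : nat) : Prop :=
  exists g : G, OrdRel S g n.

(* Main.v *)
Require Import Defs.
From Stdlib Require Import Arith Lia List Bool.
From Stdlib Require Import Classical ClassicalEpsilon FunctionalExtensionality PropExtensionality ProofIrrelevance.

Local Infix "**" := gmul (at level 40, left associativity).



Section GroupFacts.
Variable X : Group.
Implicit Types x y z : X.

Lemma gcancel_l x y z : x ** y = x ** z -> y = z.
Proof.
  intro E. rewrite <- (gmul_1l X y), <- (gmul_1l X z), <- (gmul_Vl X x).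
  rewrite <- !gmul_assoc, E. reflexivity.
Qed.

Lemma gcancel_r x y z : y ** x = z ** x -> y = z.
Proof.
  intro E. rewrite <- (gmul_1r X y), <- (gmul_1r X z), <- (gmul_Vr X x).
  rewrite !gmul_assoc, E. reflexivity.
Qed.

Lemma inv_unique x y : x ** y = gone -> y = ginv x.
Proof.
  intro E. apply (gcancel_l x). rewrite E, gmul_Vr. reflexivity.
Qed.

Lemma ginv_inv x : ginv (ginv x) = x.
Proof. symmetry. apply inv_unique. apply gmul_Vl. Qed.

Lemma ginv_mul x y : ginv (x ** y) = ginv y ** ginv x.
Proof.
  symmetry. apply inv_unique.
  rewrite <- gmul_assoc, (gmul_assoc _ y), gmul_Vr, gmul_1l, gmul_Vr. reflexivity.
Qed.

Lemma ginv_one : ginv (gone : X) = gone.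
Proof. symmetry. apply inv_unique. apply gmul_1l. Qed.

Lemma gpow_succ_r x n : gpow x (S n) = gpow x n ** x.
Proof.
  induction n; simpl. rewrite gmul_1l, gmul_1r. reflexivity.
  simpl in IHn. rewrite IHn at 1. rewrite gmul_assoc. reflexivity.
Qed.

Lemma gpow_1 x : gpow x 1 = x.
Proof. simpl. apply gmul_1r. Qed.

Lemma gpow_conj x y n : gpow (x ** y ** ginv x) n = x ** gpow y n ** ginv x.
Proof.
  induction n; simpl. rewrite gmul_1r, gmul_Vr. reflexivity.
  rewrite IHn. 
  transitivity (x ** (y ** (ginv x ** x) ** gpow y n) ** ginv x).
  rewrite !gmul_assoc. reflexivity.
  rewrite gmul_Vl, gmul_1r, !gmul_assoc. reflexivity.
Qed.

Lemma gpow_shift x w k : gpow (x ** w) (S k) = x ** (gpow (w ** x) k ** w).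
Proof.
  induction k.
  - simpl. rewrite !gmul_1r, gmul_1l. reflexivity.
  - change (gpow (x ** w) (S (S k))) with ((x ** w) ** gpow (x ** w) (S k)).
    rewrite IHk. simpl. rewrite !gmul_assoc. reflexivity.
Qed.

Lemma gpow_comm x n : x ** gpow x n = gpow x n ** x.
Proof. rewrite <- gpow_succ_r. reflexivity. Qed.

End GroupFacts.

Section HomFacts.
Variables X Y : Group.
Variable f : X -> Y.
Hypothesis hf : is_hom f.

Lemma hom_one : f gone = gone.
Proof.
  apply (gcancel_l _ (f gone)). rewrite <- hf, !gmul_1r. reflexivity.
Qed.

Lemma hom_inv x : f (ginv x) = ginv (f x).
Proof.
  apply inv_unique. rewrite <- hf, gmul_Vr. apply hom_one.
Qed.

Lemma hom_pow x n : f (gpow x n) = gpow (f x) n.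
Proof.
  induction n; simpl. apply hom_one. rewrite hf, IHn. reflexivity.
Qed.
End HomFacts.

Section SubFacts.
Variable X : Group.
Variable A : X -> Prop.
Hypothesis hA : is_subgroup A.

Lemma sub1 : A gone. Proof. apply hA. Qed.
Lemma subM x y : A x -> A y -> A (x ** y). Proof. apply hA. Qed.
Lemma subV x : A x -> A (ginv x). Proof. apply hA. Qed.
Lemma subV' x : A (ginv x) -> A x.
Proof. intro h. rewrite <- (ginv_inv X x). apply subV; auto. Qed.
Lemma subMl x y : A x -> A (x ** y) -> A y.
Proof.
  intros h1 h2. replace y with (ginv x ** (x ** y)). apply subM; auto. apply subV; auto.
  rewrite gmul_assoc, gmul_Vl, gmul_1l. reflexivity.
Qed.
Lemma subMr x y : A y -> A (x ** y) -> A x.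
Proof.
  intros h1 h2. replace x with ((x ** y) ** ginv y). apply subM; auto. apply subV; auto.
  rewrite <- gmul_assoc, gmul_Vr, gmul_1r. reflexivity.
Qed.
Lemma subpow x n : A x -> A (gpow x n).
Proof. intro h; induction n; simpl. apply sub1. apply subM; auto. Qed.
End SubFacts.



Section Rep.
Variable X : Group.
Variable A : X -> Prop.
Hypothesis hA : is_subgroup A.

Definition rep (z : X) : X :=
  match excluded_middle_informative (A z) with
  | left _ => gone
  | right _ => epsilon (inhabits gone) (fun y => A (y ** ginv z))
  end.

Lemma rep_cpart z : A (z ** ginv (rep z)).
Proof.
  unfold rep. destruct (excluded_middle_informative (A z)) as [h|h].
  - rewrite ginv_one, gmul_1r. exact h.
  - assert (E : exists y, A (y ** ginv z)).
    { exists z. rewrite gmul_Vr. apply sub1; auto. }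
    pose proof (epsilon_spec (inhabits gone) _ E) as S.
    set (y := epsilon _ _) in *.
    pose proof (subV X A hA _ S) as S'. rewrite ginv_mul, ginv_inv in S'. exact S'.
Qed.

Lemma rep_coset a z : A a -> rep (a ** z) = rep z.
Proof.
  intro ha. unfold rep.
  destruct (excluded_middle_informative (A (a ** z))) as [h1|h1];
  destruct (excluded_middle_informative (A z)) as [h2|h2]; cbn; auto.
  - exfalso. apply h2. exact (subMl X A hA a z ha h1).
  - exfalso. apply h1. exact (subM X A hA a z ha h2).
  - f_equal. apply functional_extensionality. intro y.
    apply propositional_extensionality. rewrite ginv_mul, gmul_assoc. split; intro h.
    + exact (subMr X A hA _ _ (subV X A hA _ ha) h).
    + exact (subM X A hA _ _ h (subV X A hA _ ha)).
Qed.

Lemma rep_of_A z : A z -> rep z = gone.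
Proof.
  intro h. unfold rep. destruct (excluded_middle_informative (A z)); tauto.
Qed.

Lemma rep_one_A z : rep z = gone -> A z.
Proof.
  intro e. pose proof (rep_cpart z) as c. rewrite e, ginv_one, gmul_1r in c. exact c.
Qed.

Lemma rep_decomp z : z = (z ** ginv (rep z)) ** rep z.
Proof. rewrite <- gmul_assoc, gmul_Vl, gmul_1r. reflexivity. Qed.

Lemma rep_idem z : rep (rep z) = rep z.
Proof.
  assert (E : rep z = ginv (z ** ginv (rep z)) ** z).
  { rewrite ginv_mul, ginv_inv, <- gmul_assoc, gmul_Vl, gmul_1r. reflexivity. }
  rewrite E at 1. rewrite rep_coset. reflexivity. apply (subV X A hA). apply rep_cpart.
Qed.

Lemma rep_notA z : ~ A z -> ~ A (rep z).
Proof.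
  intros h1 h2. apply h1. apply rep_one_A. rewrite <- rep_idem. apply rep_of_A. exact h2.
Qed.

End Rep.



Section Act.
Variables (H K : Group) (H0 : H -> Prop) (K0 : K -> Prop) (phi : H -> K).
Hypotheses (sH : is_subgroup H0) (sK : is_subgroup K0) (isoP : iso_between H0 K0 phi).

Definition psi (y : K) : H := epsilon (inhabits gone) (fun x => H0 x /\ phi x = y).

Lemma psi_spec y : K0 y -> H0 (psi y) /\ phi (psi y) = y.
Proof.
  intro hy. unfold psi. apply epsilon_spec. destruct isoP as [_ [_ [_ S]]]. apply S; auto.
Qed.

Lemma phi_K0 a : H0 a -> K0 (phi a).
Proof. destruct isoP as [P _]. apply P. Qed.

Lemma phi_mul a b : H0 a -> H0 b -> phi (a ** b) = phi a ** phi b.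
Proof. destruct isoP as [_ [P _]]. apply P. Qed.

Lemma phi_inj a b : H0 a -> H0 b -> phi a = phi b -> a = b.
Proof. destruct isoP as [_ [_ [P _]]]. apply P. Qed.

Lemma psi_phi a : H0 a -> psi (phi a) = a.
Proof.
  intro ha. destruct (psi_spec (phi a) (phi_K0 a ha)) as [h1 h2].
  apply phi_inj; auto.
Qed.

Lemma phi_psi y : K0 y -> phi (psi y) = y.
Proof. intro h. apply psi_spec; auto. Qed.

Lemma phi_one : phi gone = gone.
Proof.
  apply (gcancel_l _ (phi gone)). rewrite <- phi_mul, !gmul_1r; auto; apply sub1; auto.
Qed.

Local Notation repH := (rep H H0).
Local Notation repK := (rep K K0).

Definition notH (l : list (H + K)) : Prop :=
  match l with inl _ :: _ => False | _ => True end.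
Definition notK (l : list (H + K)) : Prop :=
  match l with inr _ :: _ => False | _ => True end.

Fixpoint NFl (l : list (H + K)) : Prop :=
  match l with
  | nil => True
  | inl s :: t => repH s = s /\ ~ H0 s /\ NFl t /\ notH t
  | inr s :: t => repK s = s /\ ~ K0 s /\ NFl t /\ notK t
  end.

Definition NF (p : H * list (H + K)) : Prop := H0 (fst p) /\ NFl (snd p).

Definition XT := { p : H * list (H + K) | NF p }.

Definition hpart (p : H * list (H + K)) : H :=
  match snd p with inl s :: _ => fst p ** s | _ => fst p end.
Definition htail (l : list (H + K)) : list (H + K) :=
  match l with inl _ :: t => t | _ => l end.
Definition mkH (z : H) (t : list (H + K)) : H * list (H + K) :=
  match excluded_middle_informative (H0 z) with
  | left _ => (z, t)
  | right _ => (z ** ginv (repH z), inl (repH z) :: t)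
  end.

Definition kpart (p : H * list (H + K)) : K :=
  match snd p with inr s :: _ => phi (fst p) ** s | _ => phi (fst p) end.
Definition ktail (l : list (H + K)) : list (H + K) :=
  match l with inr _ :: t => t | _ => l end.
Definition mkK (z : K) (t : list (H + K)) : H * list (H + K) :=
  match excluded_middle_informative (K0 z) with
  | left _ => (psi z, t)
  | right _ => (psi (z ** ginv (repK z)), inr (repK z) :: t)
  end.

Lemma mkH_NF z t : NFl t -> notH t -> NF (mkH z t).
Proof.
  intros h1 h2. unfold mkH, NF. destruct (excluded_middle_informative (H0 z)); simpl.
  - auto.
  - split. apply rep_cpart; auto. split. apply rep_idem; auto.
    split. apply rep_notA; auto. auto.
Qed.

Lemma mkK_NF z t : NFl t -> notK t -> NF (mkK z t).
Proof.
  intros h1 h2. unfold mkK, NF. destruct (excluded_middle_informative (K0 z)); simpl.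
  - split; auto. apply psi_spec; auto.
  - split. apply psi_spec. apply rep_cpart; auto. split. apply rep_idem; auto.
    split. apply rep_notA; auto. auto.
Qed.

Lemma htail_NF l : NFl l -> NFl (htail l) /\ notH (htail l).
Proof.
  destruct l as [|[s|s] t]; simpl; tauto.
Qed.

Lemma ktail_NF l : NFl l -> NFl (ktail l) /\ notK (ktail l).
Proof.
  destruct l as [|[s|s] t]; simpl; tauto.
Qed.

Lemma hpart_mkH z t : notH t -> hpart (mkH z t) = z.
Proof.
  intro h. unfold mkH, hpart. destruct (excluded_middle_informative (H0 z)); simpl.
  - destruct t as [|[s|s] t]; simpl in *; tauto.
  - symmetry. apply rep_decomp.
Qed.

Lemma htail_mkH z t : notH t -> htail (snd (mkH z t)) = t.
Proof.
  intro h. unfold mkH. destruct (excluded_middle_informative (H0 z)); simpl.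
  - destruct t as [|[s|s] t]; simpl in *; tauto.
  - reflexivity.
Qed.

Lemma kpart_mkK z t : notK t -> kpart (mkK z t) = z.
Proof.
  intro h. unfold mkK, kpart. destruct (excluded_middle_informative (K0 z)); simpl.
  - destruct t as [|[s|s] t]; simpl in *; try tauto; apply phi_psi; auto.
  - rewrite phi_psi. symmetry. apply rep_decomp. apply rep_cpart; auto.
Qed.

Lemma ktail_mkK z t : notK t -> ktail (snd (mkK z t)) = t.
Proof.
  intro h. unfold mkK. destruct (excluded_middle_informative (K0 z)); simpl.
  - destruct t as [|[s|s] t]; simpl in *; tauto.
  - reflexivity.
Qed.

Lemma mkH_hpart p : NF p -> mkH (hpart p) (htail (snd p)) = p.
Proof.
  destruct p as [a l]. unfold NF; simpl. intros [ha hl].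
  unfold hpart, mkH; simpl.
  destruct l as [|[s|s] t]; simpl in *.
  - destruct (excluded_middle_informative (H0 a)); tauto.
  - destruct hl as [r [ns _]].
    destruct (excluded_middle_informative (H0 (a ** s))) as [h|h].
    + exfalso. apply ns. exact (subMl H H0 sH _ _ ha h).
    + rewrite rep_coset, r; auto.
      rewrite <- gmul_assoc, gmul_Vr, gmul_1r. reflexivity.
  - destruct (excluded_middle_informative (H0 a)); tauto.
Qed.

Lemma mkK_kpart p : NF p -> mkK (kpart p) (ktail (snd p)) = p.
Proof.
  destruct p as [a l]. unfold NF; simpl. intros [ha hl].
  unfold kpart, mkK; simpl.
  destruct l as [|[s|s] t]; simpl in *.
  - destruct (excluded_middle_informative (K0 (phi a))) as [h|h].
    rewrite psi_phi; auto. exfalso; apply h, phi_K0; auto.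
  - destruct (excluded_middle_informative (K0 (phi a))) as [h|h].
    rewrite psi_phi; auto. exfalso; apply h, phi_K0; auto.
  - destruct hl as [r [ns _]].
    destruct (excluded_middle_informative (K0 (phi a ** s))) as [h|h].
    + exfalso. apply ns. exact (subMl K K0 sK _ _ (phi_K0 a ha) h).
    + rewrite rep_coset, r; auto. 2: apply phi_K0; auto.
      rewrite <- gmul_assoc, gmul_Vr, gmul_1r, psi_phi; auto.
Qed.

Definition actH_raw (h : H) (p : H * list (H + K)) := mkH (h ** hpart p) (htail (snd p)).
Definition actK_raw (k : K) (p : H * list (H + K)) := mkK (k ** kpart p) (ktail (snd p)).

Lemma actH_NF h p : NF p -> NF (actH_raw h p).
Proof.
  intros [_ hl]. destruct (htail_NF _ hl). apply mkH_NF; auto.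
Qed.
Lemma actK_NF k p : NF p -> NF (actK_raw k p).
Proof.
  intros [_ hl]. destruct (ktail_NF _ hl). apply mkK_NF; auto.
Qed.

Definition actH (h : H) (x : XT) : XT :=
  exist _ (actH_raw h (proj1_sig x)) (actH_NF h _ (proj2_sig x)).
Definition actK (k : K) (x : XT) : XT :=
  exist _ (actK_raw k (proj1_sig x)) (actK_NF k _ (proj2_sig x)).

Lemma XT_eq (x y : XT) : proj1_sig x = proj1_sig y -> x = y.
Proof.
  destruct x, y; simpl. intro e. subst. f_equal. apply proof_irrelevance.
Qed.

Lemma actH_mul h1 h2 x : actH (h1 ** h2) x = actH h1 (actH h2 x).
Proof.
  apply XT_eq. destruct x as [p np]. simpl. unfold actH_raw.
  destruct (htail_NF _ (proj2 np)) as [_ nh].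
  rewrite hpart_mkH, htail_mkH, gmul_assoc; auto.
Qed.

Lemma actH_one x : actH gone x = x.
Proof.
  apply XT_eq. destruct x as [p np]. simpl. unfold actH_raw.
  rewrite gmul_1l. apply mkH_hpart; auto.
Qed.

Lemma actK_mul k1 k2 x : actK (k1 ** k2) x = actK k1 (actK k2 x).
Proof.
  apply XT_eq. destruct x as [p np]. simpl. unfold actK_raw.
  destruct (ktail_NF _ (proj2 np)) as [_ nh].
  rewrite kpart_mkK, ktail_mkK, gmul_assoc; auto.
Qed.

Lemma actK_one x : actK gone x = x.
Proof.
  apply XT_eq. destruct x as [p np]. simpl. unfold actK_raw.
  rewrite gmul_1l. apply mkK_kpart; auto.
Qed.

Lemma act_agree a0 x : H0 a0 -> actH a0 x = actK (phi a0) x.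
Proof.
  intro ha0. apply XT_eq. destruct x as [[a l] [ha hl]]. simpl in *.
  unfold actH_raw, actK_raw, hpart, kpart, mkH, mkK; simpl.
  destruct l as [|[s|s] t]; simpl in *.
  - destruct (excluded_middle_informative (H0 (a0 ** a))) as [h|h].
    2: { exfalso; apply h, subM; auto. }
    rewrite <- phi_mul; auto.
    destruct (excluded_middle_informative (K0 (phi (a0 ** a)))) as [h'|h'].
    rewrite psi_phi; auto. exfalso; apply h', phi_K0; auto.
  - destruct hl as [r [ns [hl' nt]]].
    destruct (excluded_middle_informative (H0 (a0 ** (a ** s)))) as [h|h].
    + exfalso. apply ns. exact (subMl H H0 sH _ _ (subM H H0 sH _ _ ha0 ha) (eq_ind _ _ h _ (gmul_assoc _ _ _ _))).
    + rewrite gmul_assoc, rep_coset, r; auto. 2: apply subM; auto.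
      rewrite <- gmul_assoc, gmul_Vr, gmul_1r.
      rewrite <- phi_mul; auto.
      destruct (excluded_middle_informative (K0 (phi (a0 ** a)))) as [h'|h'].
      rewrite psi_phi; auto. apply subM; auto. exfalso; apply h', phi_K0, subM; auto.
  - destruct hl as [r [ns [hl' nt]]].
    destruct (excluded_middle_informative (H0 (a0 ** a))) as [h|h].
    2: { exfalso; apply h, subM; auto. }
    destruct (excluded_middle_informative (K0 (phi a0 ** (phi a ** s)))) as [h'|h'].
    + exfalso. apply ns. refine (subMl K K0 sK _ _ _ (eq_ind _ _ h' _ (gmul_assoc _ _ _ _))).
      apply subM; auto; apply phi_K0; auto.
    + rewrite gmul_assoc, rep_coset, r; auto. 2: apply subM; auto; apply phi_K0; auto.
      rewrite <- gmul_assoc, gmul_Vr, gmul_1r.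
      rewrite <- phi_mul, psi_phi; auto.
Qed.

End Act.


Section BijGroup.
Variable T : Type.

Record Bij : Type := MkBij {
  bf : T -> T; bg : T -> T;
  bfg : forall x, bf (bg x) = x; bgf : forall x, bg (bf x) = x }.

Lemma Bij_ext (p q : Bij) : (forall x, bf p x = bf q x) -> p = q.
Proof.
  intro E. destruct p as [f g fg gf], q as [f' g' fg' gf']; simpl in *.
  assert (Ef : f = f') by (apply functional_extensionality; auto). subst f'.
  assert (Eg : g = g').
  { apply functional_extensionality. intro x.
    rewrite <- (fg' x) at 1. rewrite gf. reflexivity. }
  subst g'. f_equal; apply proof_irrelevance.
Qed.

Definition bmul (p q : Bij) : Bij.
Proof.
  refine (MkBij (fun x => bf p (bf q x)) (fun x => bg q (bg p x)) _ _).
  - intro x. rewrite bfg, bfg. reflexivity.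
  - intro x. rewrite bgf, bgf. reflexivity.
Defined.

Definition bone : Bij := MkBij (fun x => x) (fun x => x) (fun x => eq_refl) (fun x => eq_refl).

Definition binv (p : Bij) : Bij := MkBij (bg p) (bf p) (bgf p) (bfg p).

Definition BijGroup : Group.
Proof.
  refine (MkGroup Bij bmul bone binv _ _ _ _ _);
    intros; apply Bij_ext; intros; simpl; auto using bfg, bgf.
Defined.

End BijGroup.



Lemma OrdRel_transfer (G1 G2 : Group) (S1 : G1 -> Prop) (S2 : G2 -> Prop) (g1 : G1) (g2 : G2) n :
  (forall j, S1 (gpow g1 j) <-> S2 (gpow g2 j)) -> OrdRel S1 g1 n -> OrdRel S2 g2 n.
Proof.
  intros E [[h1 [h2 h3]]|[h1 h2]].
  - left. split; auto. split. apply E; auto. intros k hk hk' c. apply (h3 k hk hk'). apply E; auto.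
  - right. split; auto. intros k hk c. apply (h2 k hk). apply E; auto.
Qed.

Section Main.
Variables (H K : Group) (H0 : H -> Prop) (K0 : K -> Prop) (phi : H -> K)
  (G : Group) (iH : H -> G) (iK : K -> G).
Hypotheses (tfH : torsion_free H) (tfK : torsion_free K)
  (sH : is_subgroup H0) (mH : malnormal H0) (sK : is_subgroup K0)
  (isoP : iso_between H0 K0 phi)
  (homH : is_hom iH) (homK : is_hom iK)
  (amal : forall h, H0 h -> iH h = iK (phi h))
  (univ : forall (L : Group) (f : H -> L) (g : K -> L),
     is_hom f -> is_hom g -> (forall h, H0 h -> f h = g (phi h)) ->
     exists u : G -> L, is_hom u /\ (forall h, u (iH h) = f h) /\ (forall k, u (iK k) = g k) /\
       (forall v : G -> L, is_hom v -> (forall h, v (iH h) = f h) -> (forall k, v (iK k) = g k) ->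
          forall x, v x = u x)).

Local Notation X := (XT H K H0 K0).
Local Notation aH := (actH H K H0 K0 sH).
Local Notation aK := (actK H K H0 K0 phi sK isoP).
Local Notation BG := (BijGroup X).

Definition BH (h : H) : BG.
Proof.
  refine (MkBij X (aH h) (aH (ginv h)) _ _); intro x.
  - rewrite <- actH_mul, gmul_Vr, actH_one; reflexivity.
  - rewrite <- actH_mul, gmul_Vl, actH_one; reflexivity.
Defined.

Definition BK (k : K) : BG.
Proof.
  refine (MkBij X (aK k) (aK (ginv k)) _ _); intro x.
  - rewrite <- actK_mul, gmul_Vr, actK_one; reflexivity.
  - rewrite <- actK_mul, gmul_Vl, actK_one; reflexivity.
Defined.

Lemma BH_hom : is_hom BH.
Proof. intros a b. apply Bij_ext. intro x. simpl. apply actH_mul. Qed.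
Lemma BK_hom : is_hom BK.
Proof. intros a b. apply Bij_ext. intro x. simpl. apply actK_mul. Qed.
Lemma B_agree h : H0 h -> BH h = BK (phi h).
Proof. intro hh. apply Bij_ext. intro x. simpl. apply act_agree; auto. Qed.

Lemma u_exists : exists u : G -> BG, is_hom u /\ (forall h, u (iH h) = BH h) /\ (forall k, u (iK k) = BK k).
Proof.
  destruct (univ BG BH BK BH_hom BK_hom B_agree) as [u [h1 [h2 [h3 _]]]].
  exists u; auto.
Qed.


Inductive Gen : G -> Prop :=
| gen1 : Gen gone
| genH h g : Gen g -> Gen (iH h ** g)
| genK k g : Gen g -> Gen (iK k ** g).

Lemma Gen_mul x y : Gen x -> Gen y -> Gen (x ** y).
Proof.
  intros hx hy. induction hx.
  - rewrite gmul_1l; auto.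
  - rewrite <- gmul_assoc. constructor; auto.
  - rewrite <- gmul_assoc. constructor; auto.
Qed.

Lemma Gen_H h : Gen (iH h).
Proof. rewrite <- (gmul_1r G (iH h)). constructor. constructor. Qed.
Lemma Gen_K k : Gen (iK k).
Proof. rewrite <- (gmul_1r G (iK k)). constructor. constructor. Qed.

Lemma Gen_inv x : Gen x -> Gen (ginv x).
Proof.
  intro hx. induction hx.
  - rewrite ginv_one. constructor.
  - rewrite ginv_mul, <- hom_inv; auto. apply Gen_mul; auto. apply Gen_H.
  - rewrite ginv_mul, <- hom_inv; auto. apply Gen_mul; auto. apply Gen_K.
Qed.

Definition GT := { x : G | Gen x }.
Lemma GT_eq (a b : GT) : proj1_sig a = proj1_sig b -> a = b.
Proof. destruct a, b; simpl; intro e; subst; f_equal; apply proof_irrelevance. Qed.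

Definition GenGroup : Group.
Proof.
  refine (MkGroup GT
    (fun a b => exist _ (proj1_sig a ** proj1_sig b) (Gen_mul _ _ (proj2_sig a) (proj2_sig b)))
    (exist _ gone gen1)
    (fun a => exist _ (ginv (proj1_sig a)) (Gen_inv _ (proj2_sig a))) _ _ _ _ _);
  intros; apply GT_eq; simpl.
  apply gmul_assoc. apply gmul_1l. apply gmul_1r. apply gmul_Vl. apply gmul_Vr.
Defined.

Lemma all_Gen x : Gen x.
Proof.
  set (f := fun h => (exist _ (iH h) (Gen_H h) : GenGroup)).
  set (g := fun k => (exist _ (iK k) (Gen_K k) : GenGroup)).
  assert (hf : is_hom f) by (intros a b; apply GT_eq; simpl; apply homH).
  assert (hg : is_hom g) by (intros a b; apply GT_eq; simpl; apply homK).
  assert (hfg : forall h, H0 h -> f h = g (phi h)) by (intros h hh; apply GT_eq; simpl; auto).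
  destruct (univ GenGroup f g hf hg hfg) as [u' [hu' [hu1 [hu2 _]]]].
  destruct (univ G iH iK homH homK amal) as [u0 [_ [_ [_ uniq]]]].
  set (v := fun x => proj1_sig (u' x)).
  assert (e1 : v x = u0 x).
  { apply uniq.
    - intros a b. unfold v. rewrite hu'. reflexivity.
    - intro h. unfold v. rewrite hu1. reflexivity.
    - intro k. unfold v. rewrite hu2. reflexivity. }
  assert (e2 : x = u0 x).
  { apply (uniq (fun y => y)); try (intros ? ?); reflexivity. }
  rewrite e2, <- e1. unfold v. apply proj2_sig.
Qed.

Inductive letter := LH (h : H) | LK (k : K).
Definition ev (x : letter) : G := match x with LH h => iH h | LK k => iK k end.
Definition good (x : letter) : Prop := match x with LH h => ~ H0 h | LK k => ~ K0 k end.
Definition ltyp (x : letter) : bool := match x with LH _ => true | LK _ => false end.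

Inductive RW : bool -> bool -> nat -> G -> Prop :=
| RW1 x : good x -> RW (ltyp x) (ltyp x) 1 (ev x)
| RWc x e m g : good x -> RW (negb (ltyp x)) e m g -> RW (ltyp x) e (S m) (ev x ** g).

Lemma RW_pos t e m g : RW t e m g -> 1 <= m.
Proof. intro h; destruct h; lia. Qed.

Lemma RW_inv t e m g : RW t e m g ->
  (m = 1 /\ e = t /\ exists x, good x /\ ltyp x = t /\ g = ev x) \/
  (exists x g' m', m = S m' /\ 1 <= m' /\ good x /\ ltyp x = t /\ RW (negb t) e m' g' /\ g = ev x ** g').
Proof.
  intro h. destruct h as [x gx|x e m g gx r].
  - left. split; auto. split; auto. exists x; auto.
  - right. exists x, g, m. pose proof (RW_pos _ _ _ _ r). repeat split; auto.
Qed.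

Lemma RW_one t e g : RW t e 1 g -> e = t /\ exists x, good x /\ ltyp x = t /\ g = ev x.
Proof.
  intro h. destruct (RW_inv _ _ _ _ h) as [[_ [e1 hx]]|[x [g' [m' [e1 [e2 _]]]]]].
  auto. lia.
Qed.

Lemma RW_snoc t e m g y : RW t e m g -> good y -> ltyp y = negb e ->
  RW t (negb e) (S m) (g ** ev y).
Proof.
  intros h gy ty. induction h as [x gx|x e m g gx r IH].
  - rewrite <- ty. apply RWc; auto. rewrite ty. apply RW1 in gy. rewrite ty in gy. exact gy.
  - rewrite <- gmul_assoc. apply RWc; auto.
Qed.

Lemma RW_concat t e m g e' m' g' : RW t e m g -> RW (negb e) e' m' g' -> RW t e' (m + m') (g ** g').
Proof.
  intros h1 h2. induction h1 as [x gx|x e m g gx r IH].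
  - simpl. apply RWc; auto.
  - rewrite <- gmul_assoc. simpl. apply RWc; auto.
Qed.

Lemma RW_unsnoc t e m g : RW t e m g -> 2 <= m ->
  exists g' y, g = g' ** ev y /\ good y /\ ltyp y = e /\ RW t (negb e) (m - 1) g'.
Proof.
  intro h. induction h as [x gx|x e m g gx r IH]; intro hm.
  - lia.
  - destruct (Nat.eq_dec m 1) as [->|ne].
    + destruct (RW_one _ _ _ r) as [et [y [gy [ty ->]]]].
      exists (ev x), y. repeat split; auto. congruence. simpl. rewrite et, negb_involutive. apply RW1; auto.
    + destruct IH as [g'' [y [-> [gy [ty r']]]]]. pose proof (RW_pos _ _ _ _ r); lia.
      exists (ev x ** g''), y. repeat split; auto. rewrite gmul_assoc; auto.
      replace (S m - 1) with (S (m - 1)) by (pose proof (RW_pos _ _ _ _ r); lia).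
      apply RWc; auto.
Qed.


Local Notation ps := (psi H K H0 phi).

Lemma K0_to_H b : K0 b -> H0 (ps b) /\ iK b = iH (ps b).
Proof.
  intro hb. destruct (psi_spec H K H0 K0 phi isoP b hb) as [h1 h2].
  split; auto. rewrite amal; auto. congruence.
Qed.

Lemma phiK0 a : H0 a -> K0 (phi a).
Proof. apply (phi_K0 H K H0 K0 phi isoP). Qed.

Definition lmul (x y : letter) : letter :=
  match x, y with LH a, LH b => LH (a ** b) | LK a, LK b => LK (a ** b) | _, _ => x end.

Lemma lmul_ev x y : ltyp x = ltyp y -> ev (lmul x y) = ev x ** ev y.
Proof. destruct x, y; simpl; intro e; try discriminate; auto. Qed.
Lemma lmul_typ x y : ltyp (lmul x y) = ltyp x.
Proof. destruct x, y; reflexivity. Qed.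

Lemma notgood z : ~ good z -> exists a, H0 a /\ ev z = iH a.
Proof.
  destruct z as [h|k]; simpl; intro n; apply NNPP in n.
  - exists h; auto.
  - destruct (K0_to_H k n). exists (ps k); auto.
Qed.

Lemma absorbR_letter x a : H0 a -> exists x', ltyp x' = ltyp x /\ ev x' = ev x ** iH a /\ (good x -> good x').
Proof.
  intro ha. destruct x as [h|k].
  - exists (LH (h ** a)). simpl. repeat split; auto. intros n1 n2. apply n1.
    exact (subMr H H0 sH _ _ ha n2).
  - exists (LK (k ** phi a)). simpl. repeat split.
    rewrite amal, homK; auto. intros n1 n2. apply n1.
    exact (subMr K K0 sK _ _ (phiK0 a ha) n2).
Qed.

Lemma absorbL_letter x a : H0 a -> exists x', ltyp x' = ltyp x /\ ev x' = iH a ** ev x /\ (good x -> good x').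
Proof.
  intro ha. destruct x as [h|k].
  - exists (LH (a ** h)). simpl. repeat split; auto. intros n1 n2. apply n1.
    exact (subMl H H0 sH _ _ ha n2).
  - exists (LK (phi a ** k)). simpl. repeat split.
    rewrite amal, homK; auto. intros n1 n2. apply n1.
    exact (subMl K K0 sK _ _ (phiK0 a ha) n2).
Qed.

Lemma RW_absorbR a t e m g : H0 a -> RW t e m g -> RW t e m (g ** iH a).
Proof.
  intros ha h. induction h as [x gx|x e m g gx r IH].
  - destruct (absorbR_letter x a ha) as [x' [t' [e' g']]].
    rewrite <- e', <- t'. apply RW1; auto.
  - rewrite <- gmul_assoc. apply RWc; auto.
Qed.

Lemma RW_absorbL a t e m g : H0 a -> RW t e m g -> RW t e m (iH a ** g).
Proof.
  intros ha h. destruct h as [x gx|x e m g gx r].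
  - destruct (absorbL_letter x a ha) as [x' [t' [e' g']]].
    rewrite <- e', <- t'. apply RW1; auto.
  - destruct (absorbL_letter x a ha) as [x' [t' [e' g']]].
    rewrite gmul_assoc, <- e', <- t'. apply RWc; auto. rewrite t'; auto.
Qed.

Definition linv (x : letter) : letter := match x with LH h => LH (ginv h) | LK k => LK (ginv k) end.
Lemma linv_ev x : ev (linv x) = ginv (ev x).
Proof. destruct x; simpl; apply hom_inv; auto. Qed.
Lemma linv_typ x : ltyp (linv x) = ltyp x.
Proof. destruct x; reflexivity. Qed.
Lemma linv_good x : good x -> good (linv x).
Proof.
  destruct x; simpl; intros n1 n2; apply n1.
  exact (subV' H H0 sH _ n2). exact (subV' K K0 sK _ n2).
Qed.

Lemma conj_RW s q R x : RW s s q R -> good x -> ltyp x = negb s ->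
  RW (ltyp x) (ltyp x) (S (S q)) (ev x ** R ** ginv (ev x)).
Proof.
  intros r gx tx. rewrite <- linv_ev, <- gmul_assoc.
  apply RWc; auto. rewrite tx, negb_involutive.
  replace (negb s) with (negb s) by reflexivity.
  apply RW_snoc; auto. apply linv_good; auto. rewrite linv_typ; auto.
Qed.

Definition NFG (g : G) : Prop := (exists a, H0 a /\ g = iH a) \/ exists t e m, RW t e m g.

Lemma NFG_mul x g : NFG g -> NFG (ev x ** g).
Proof.
  intros [[a [ha ->]]|[t [e [m r]]]].
  - destruct (absorbR_letter x a ha) as [x' [t' [e' g']]]. rewrite <- e'.
    destruct (classic (good x')) as [gx|ngx].
    + right. exists (ltyp x'), (ltyp x'), 1. apply RW1; auto.
    + left. destruct (notgood _ ngx) as [b [hb eb]]. exists b; auto.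
  - destruct (bool_dec (ltyp x) t) as [tx|tx].
    + destruct (RW_inv _ _ _ _ r) as [[_ [et [y [gy [ty ->]]]]]|[y [g' [m' [_ [_ [gy [ty [r' ->]]]]]]]]].
      * rewrite <- lmul_ev by congruence.
        destruct (classic (good (lmul x y))) as [gz|ngz].
        -- right. do 3 eexists. apply RW1; auto.
        -- left. destruct (notgood _ ngz) as [b [hb eb]]. exists b; auto.
      * rewrite gmul_assoc, <- lmul_ev by congruence.
        destruct (classic (good (lmul x y))) as [gz|ngz].
        -- right. do 3 eexists. apply RWc; auto. rewrite lmul_typ, tx. exact r'.
        -- right. destruct (notgood _ ngz) as [b [hb eb]]. rewrite eb.
           do 3 eexists. apply RW_absorbL; eauto.
    + destruct (classic (good x)) as [gx|ngx].
      * right. do 3 eexists. apply RWc; auto.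
        replace (negb (ltyp x)) with t. exact r. destruct t, (ltyp x); simpl in *; congruence.
      * right. destruct (notgood _ ngx) as [b [hb eb]]. rewrite eb.
        do 3 eexists. apply RW_absorbL; eauto.
Qed.

Lemma all_NFG g : NFG g.
Proof.
  induction (all_Gen g).
  - left. exists gone. split. apply sub1; auto. symmetry. apply hom_one; auto.
  - exact (NFG_mul (LH h) g IHg0).
  - exact (NFG_mul (LK k) g IHg0).
Qed.



Lemma mal_pow h n : ~ H0 h -> 1 <= n -> ~ H0 (gpow h n).
Proof.
  intros nh hn c. pose proof (mH h nh (gpow h n) c) as M.
  unfold Defs.conj in M.
  assert (E : ginv h ** (gpow h n ** h) = gpow h n).
  { rewrite <- gpow_comm, gmul_assoc, gmul_Vl, gmul_1l. reflexivity. }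
  rewrite E in M. specialize (M c). apply nh.
  rewrite (tfH h n hn M). apply sub1; auto.
Qed.

Lemma mal_conj h a : ~ H0 h -> H0 a -> a <> gone -> ~ H0 (h ** a ** ginv h).
Proof.
  intros nh ha na c.
  assert (nh' : ~ H0 (ginv h)) by (intro c'; apply nh; exact (subV' H H0 sH _ c')).
  pose proof (mH (ginv h) nh' a ha) as M. unfold Defs.conj in M.
  rewrite ginv_inv, gmul_assoc in M. specialize (M c).
  apply na. apply (gcancel_l _ h). apply (gcancel_r _ (ginv h)).
  rewrite M, gmul_1r, gmul_Vr. reflexivity.
Qed.

Lemma RW_powapp t m P e m' R : RW t (negb t) m P -> RW t e m' R ->
  forall j, RW t e (j * m + m') (gpow P j ** R).
Proof.
  intros rP rR j. induction j; simpl.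
  - rewrite gmul_1l. exact rR.
  - rewrite <- gmul_assoc. replace (m + j * m + m') with (m + (j * m + m')) by lia.
    apply RW_concat with (e := negb t); auto.
    rewrite negb_involutive. exact IHj.
Qed.

Lemma RW_powCR t m g n : RW t (negb t) m g -> 1 <= n -> RW t (negb t) (n * m) (gpow g n).
Proof.
  intros r hn. destruct n as [|k]. lia.
  replace (S k * m) with (k * m + m) by lia. rewrite gpow_succ_r.
  apply RW_powapp; auto.
Qed.

Lemma WRAP t x y Q q : good x -> good y -> ltyp x = t -> ltyp y = t ->
  RW (negb t) (negb t) q Q -> good (lmul y x) ->
  forall n, 1 <= n -> exists m', 3 <= m' /\ RW t t m' (gpow (ev x ** Q ** ev y) n).
Proof.
  intros gx gy tx ty rQ gz n hn. pose proof (RW_pos _ _ _ _ rQ) as hq.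
  assert (rW : RW (negb t) t (S q) (Q ** ev y)).
  { rewrite <- (negb_involutive t) at 2. apply RW_snoc; auto. rewrite negb_involutive; auto. }
  assert (rP : RW (negb t) (negb (negb t)) (S q) (Q ** ev y ** ev x)).
  { rewrite <- gmul_assoc, <- lmul_ev by congruence. apply RW_snoc; auto.
    rewrite lmul_typ, negb_involutive; auto. }
  destruct n as [|k]. lia.
  rewrite <- gmul_assoc, gpow_shift.
  exists (S (k * S q + S q)). split. lia.
  rewrite <- tx at 1. apply RWc; auto. rewrite tx.
  apply RW_powapp; auto.
Qed.

Lemma PEEL t x y Q q : good x -> good y -> ltyp x = t -> ltyp y = t ->
  RW (negb t) (negb t) q Q -> ~ good (lmul y x) ->
  exists N, RW (negb t) (negb t) q N /\ ev x ** Q ** ev y = ev x ** N ** ginv (ev x).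
Proof.
  intros gx gy tx ty rQ ngz. destruct (notgood _ ngz) as [a [ha ea]].
  exists (Q ** iH a). split. apply RW_absorbR; auto.
  rewrite lmul_ev in ea by congruence.
  assert (E : ev y = iH a ** ginv (ev x)).
  { rewrite <- ea, <- gmul_assoc, gmul_Vr, gmul_1r. reflexivity. }
  rewrite E, !gmul_assoc. reflexivity.
Qed.

Lemma DEC t m g : RW t t m g -> 2 <= m ->
  exists x y Q q, g = ev x ** Q ** ev y /\ good x /\ good y /\ ltyp x = t /\ ltyp y = t /\
    RW (negb t) (negb t) q Q /\ m = S (S q).
Proof.
  intros r hm. destruct (RW_inv _ _ _ _ r) as [[e1 _]|[x [g' [m' [e1 [hm' [gx [tx [r' ->]]]]]]]]].
  - lia.
  - destruct (Nat.eq_dec m' 1) as [->|ne].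
    + destruct (RW_one _ _ _ r') as [c _]. destruct t; discriminate.
    + destruct (RW_unsnoc _ _ _ _ r') as [Q [y [-> [gy [ty rQ]]]]]. lia.
      exists x, y, Q, (m' - 1). repeat split; auto. rewrite gmul_assoc; auto. lia.
Qed.

Lemma RW_tt2 t g : RW t t 2 g -> False.
Proof.
  intro r. destruct (DEC _ _ _ r) as [x [y [Q [q [_ [_ [_ [_ [_ [rQ e]]]]]]]]]]. lia.
  pose proof (RW_pos _ _ _ _ rQ). lia.
Qed.

Lemma typ_true x : ltyp x = true -> exists h, x = LH h.
Proof. destruct x; simpl; intro e; try discriminate. eauto. Qed.
Lemma typ_false x : ltyp x = false -> exists k, x = LK k.
Proof. destruct x; simpl; intro e; try discriminate. eauto. Qed.

Lemma Kpow_conj h1 k n : ~ H0 h1 -> ~ K0 k -> 1 <= n ->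
  exists m', 1 <= m' /\ RW true true m' (iH h1 ** iK (gpow k n) ** ginv (iH h1)).
Proof.
  intros nh nk hn. destruct (classic (K0 (gpow k n))) as [c|c].
  - destruct (psi_spec H K H0 K0 phi isoP _ c) as [hb eb].
    rewrite <- eb, <- amal, <- hom_inv, <- !homH; auto.
    exists 1. split; auto. change true with (ltyp (LH (h1 ** ps (gpow k n) ** ginv h1))).
    apply RW1. simpl. apply mal_conj; auto. intro b1. rewrite b1, (phi_one H K H0 K0 phi sH isoP) in eb.
    apply nk. rewrite (tfK k n hn (eq_sym eb)). apply sub1; auto.
  - exists 3. split. lia. change true with (ltyp (LH h1)). change (iH h1) with (ev (LH h1)).
    apply (conj_RW false 1). exact (RW1 (LK (gpow k n)) c). exact nh. reflexivity.
Qed.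

Lemma LAB m :
  (forall g, RW true true m g -> forall n, 1 <= n -> exists m', 1 <= m' /\ RW true true m' (gpow g n)) /\
  (forall g, RW false false m g -> 3 <= m -> forall n, 1 <= n -> exists m', 3 <= m' /\ RW false false m' (gpow g n)).
Proof.
  induction m as [m IH] using (well_founded_induction lt_wf). split.
  - intros g r n hn. destruct (Nat.eq_dec m 1) as [->|ne].
    + destruct (RW_one _ _ _ r) as [_ [x [gx [tx ->]]]].
      destruct (typ_true x tx) as [h ->]. simpl. rewrite <- hom_pow; auto.
      exists 1. split; auto. change true with (ltyp (LH (gpow h n))). apply RW1. apply mal_pow; auto.
    + pose proof (RW_pos _ _ _ _ r).
      destruct (DEC _ _ _ r) as [x [y [Q [q [-> [gx [gy [tx [ty [rQ em]]]]]]]]]]. lia.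
      destruct (classic (good (lmul y x))) as [gz|ngz].
      * destruct (WRAP _ _ _ _ _ gx gy tx ty rQ gz n hn) as [m' [h1 h2]]. exists m'; split; auto; lia.
      * destruct (PEEL _ _ _ _ _ gx gy tx ty rQ ngz) as [N [rN ->]].
        rewrite gpow_conj. destruct (typ_true x tx) as [h1 ->].
        destruct (Nat.eq_dec q 1) as [->|nq].
        -- destruct (RW_one _ _ _ rN) as [_ [z [gz [tz ->]]]]. destruct (typ_false z tz) as [k ->].
           simpl. rewrite <- hom_pow; auto. apply Kpow_conj; auto.
        -- assert (h3q : 3 <= q).
           { pose proof (RW_pos _ _ _ _ rN). destruct (Nat.eq_dec q 2) as [->|]. exfalso; eapply RW_tt2; eauto. lia. }
           destruct (proj2 (IH q ltac:(lia)) N rN h3q n hn) as [m'' [hm'' r'']].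
           exists (S (S m'')). split. lia. change true with (ltyp (LH h1)). apply (conj_RW false); auto.
  - intros g r hm n hn.
    destruct (DEC _ _ _ r) as [x [y [Q [q [-> [gx [gy [tx [ty [rQ em]]]]]]]]]]. lia.
    destruct (classic (good (lmul y x))) as [gz|ngz].
    + exact (WRAP _ _ _ _ _ gx gy tx ty rQ gz n hn).
    + destruct (PEEL _ _ _ _ _ gx gy tx ty rQ ngz) as [N [rN ->]].
      rewrite gpow_conj.
      destruct (proj1 (IH q ltac:(lia)) N rN n hn) as [m'' [hm'' r'']].
      exists (S (S m'')). split. lia. rewrite <- tx at 1 2. apply (conj_RW true); auto.
Qed.

Section WithU.
Variable u : G -> BG.
Hypotheses (hu : is_hom u) (huH : forall h, u (iH h) = BH h) (huK : forall k, u (iK k) = BK k).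

Definition base : X.
Proof. refine (exist _ (gone, nil) _). split. apply sub1; auto. exact I. Defined.

Definition state (g : G) : H * list (H + K) := proj1_sig (bf X (u g) base).

Lemma state_one : state gone = (gone, nil).
Proof. unfold state. rewrite (hom_one _ _ u hu). reflexivity. Qed.

Lemma state_NF g : NF H K H0 K0 (state g).
Proof. unfold state. apply proj2_sig. Qed.

Lemma state_H h g : state (iH h ** g) = actH_raw H K H0 h (state g).
Proof. unfold state. rewrite hu. simpl. rewrite huH. reflexivity. Qed.
Lemma state_K k g : state (iK k ** g) = actK_raw H K H0 K0 phi k (state g).
Proof. unfold state. rewrite hu. simpl. rewrite huK. reflexivity. Qed.

Definition headty (l : list (H + K)) : option bool :=
  match l with inl _ :: _ => Some true | inr _ :: _ => Some false | nil => None end.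

Lemma state_step x g : good x -> headty (snd (state g)) <> Some (ltyp x) ->
  length (snd (state (ev x ** g))) = S (length (snd (state g))) /\
  headty (snd (state (ev x ** g))) = Some (ltyp x).
Proof.
  intros gx ht. pose proof (state_NF g) as nf. destruct (state g) as [a l] eqn:E.
  destruct nf as [ha hl]. simpl in ha, hl, ht.
  destruct x as [h|k]; simpl in *.
  - rewrite state_H, E. unfold actH_raw, hpart, htail, mkH. simpl.
    destruct l as [|[s|s] t]; simpl in *; try congruence;
    (destruct (excluded_middle_informative (H0 (h ** a))) as [c|c];
     [exfalso; apply gx; exact (subMr H H0 sH _ _ ha c)| simpl; auto]).
  - rewrite state_K, E. unfold actK_raw, kpart, ktail, mkK. simpl.
    destruct l as [|[s|s] t]; simpl in *; try congruence;
    (destruct (excluded_middle_informative (K0 (k ** phi a))) as [c|c];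
     [exfalso; apply gx; exact (subMr K K0 sK _ _ (phiK0 a ha) c)| simpl; auto]).
Qed.

Lemma KL t e m g : RW t e m g -> length (snd (state g)) = m /\ headty (snd (state g)) = Some t.
Proof.
  intro r. induction r as [x gx|x e m g gx r [IH1 IH2]].
  - rewrite <- (gmul_1r G (ev x)). destruct (state_step x gone gx) as [h1 h2].
    rewrite state_one; simpl; congruence. rewrite h1, h2, state_one. auto.
  - destruct (state_step x g gx) as [h1 h2].
    rewrite IH2. destruct (ltyp x); simpl; congruence.
    rewrite h1, h2, IH1. auto.
Qed.

Lemma NS t e m g h : RW t e m g -> g = iH h -> m = 1 /\ t = true.
Proof.
  intros r eg. destruct (KL _ _ _ _ r) as [h1 h2]. subst g.
  rewrite <- (gmul_1r G (iH h)), state_H, state_one in h1, h2.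
  unfold actH_raw, hpart, htail, mkH in h1, h2. simpl in h1, h2.
  destruct (excluded_middle_informative (H0 (h ** gone))); simpl in h1, h2.
  - pose proof (RW_pos _ _ _ _ r). lia.
  - split. lia. congruence.
Qed.


Lemma struct g n : 1 <= n -> (exists h0, iH h0 = gpow g n) ->
  (exists h, g = iH h) \/ exists h k, g = iH h ** iK k ** ginv (iH h).
Proof.
  intros hn [h0 e0]. symmetry in e0.
  destruct (all_NFG g) as [[a [ha ->]]|[t [e [m r]]]]. left; eauto.
  pose proof (RW_pos _ _ _ _ r) as hm.
  destruct t, e.
  - destruct (Nat.eq_dec m 1) as [->|ne].
    + destruct (RW_one _ _ _ r) as [_ [x [gx [tx ->]]]]. destruct (typ_true x tx) as [h ->]. left; exists h; reflexivity.
    + destruct (DEC _ _ _ r) as [x [y [Q [q [-> [gx [gy [tx [ty [rQ em]]]]]]]]]]. lia.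
      destruct (classic (good (lmul y x))) as [gz|ngz].
      * destruct (WRAP _ _ _ _ _ gx gy tx ty rQ gz n hn) as [m' [h1 h2]].
        destruct (NS _ _ _ _ _ h2 e0). lia.
      * destruct (PEEL _ _ _ _ _ gx gy tx ty rQ ngz) as [N [rN EN]]. rewrite EN in *.
        destruct (typ_true x tx) as [h1 ->].
        destruct (Nat.eq_dec q 1) as [->|nq].
        -- destruct (RW_one _ _ _ rN) as [_ [z [gz [tz ->]]]]. destruct (typ_false z tz) as [k ->].
           right. exists h1, k. reflexivity.
        -- exfalso. assert (h3q : 3 <= q).
           { pose proof (RW_pos _ _ _ _ rN). destruct (Nat.eq_dec q 2) as [->|]. exfalso; eapply RW_tt2; eauto. lia. }
           destruct (proj2 (LAB q) N rN h3q n hn) as [m'' [hm'' r'']].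
           rewrite gpow_conj in e0.
           assert (rr : RW (ltyp (LH h1)) (ltyp (LH h1)) (S (S m'')) (ev (LH h1) ** gpow N n ** ginv (ev (LH h1)))).
           { apply (conj_RW false); auto. }
           destruct (NS _ _ _ _ _ rr e0). lia.
  - exfalso. pose proof (RW_powCR true m g n r hn) as r'.
    destruct (NS _ _ _ _ _ r' e0) as [c _].
    assert (m = 1) by nia. subst m. destruct (RW_one _ _ _ r) as [c' _]. discriminate.
  - exfalso. pose proof (RW_powCR false m g n r hn) as r'.
    destruct (NS _ _ _ _ _ r' e0) as [_ c]. discriminate.
  - destruct (Nat.eq_dec m 1) as [->|ne].
    + destruct (RW_one _ _ _ r) as [_ [x [gx [tx ->]]]]. destruct (typ_false x tx) as [k ->].
      right. exists gone, k. simpl. rewrite hom_one, ginv_one, gmul_1l, gmul_1r; auto.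
    + destruct (Nat.eq_dec m 2) as [->|ne2]. exfalso; eapply RW_tt2; eauto.
      destruct (proj2 (LAB m) g r ltac:(lia) n hn) as [m' [hm' r']].
      destruct (NS _ _ _ _ _ r' e0) as [_ c]. discriminate.
Qed.

Lemma S_pow_K k j : (exists h, iH h = gpow (iK k) j) <-> K0 (gpow k j).
Proof.
  rewrite <- hom_pow; auto. split.
  - intros [h e]. apply NNPP. intro c.
    destruct (NS _ _ _ _ _ (RW1 (LK (gpow k j)) c) (eq_sym e)) as [_ d]. discriminate.
  - intro c. destruct (K0_to_H _ c) as [_ e]. eauto.
Qed.

Lemma S_conj h y : (exists z, iH z = iH h ** y ** ginv (iH h)) <-> (exists z, iH z = y).
Proof.
  split.
  - intros [z e]. exists (ginv h ** z ** h).
    rewrite !homH, e, hom_inv; auto.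
    rewrite !gmul_assoc, gmul_Vl, gmul_1l, <- gmul_assoc, gmul_Vl, gmul_1r. reflexivity.
  - intros [z <-]. exists (h ** z ** ginv h). rewrite !homH, hom_inv; auto.
Qed.


Lemma final_iff (pH : proper H0) (pK : proper K0) n :
  OrdSet (fun x : G => exists h : H, iH h = x) n <-> (OrdSet K0 n \/ n = 0).
Proof.
  split.
  - intros [g [[hn [hS hmin]]|[hn0 _]]]; [|right; auto].
    left. destruct (struct g n hn hS) as [[h ->]|[h [k ->]]].
    + destruct (Nat.eq_dec n 1) as [->|ne].
      * exists gone. left. split; auto. rewrite gpow_1. split. apply sub1; auto. intros; lia.
      * exfalso. apply (hmin 1). auto. lia. rewrite gpow_1. eauto.
    + exists k. assert (E : forall j, (exists h0, iH h0 = gpow (iH h ** iK k ** ginv (iH h)) j) <-> K0 (gpow k j)).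
      { intro j. rewrite gpow_conj, S_conj. apply S_pow_K. }
      apply (OrdRel_transfer G K (fun x : G => exists h0 : H, iH h0 = x) K0 _ _ _ E). left. split; auto.
  - intros [[k hk]| ->].
    + exists (iK k). refine (OrdRel_transfer K G K0 (fun x : G => exists h0 : H, iH h0 = x) _ _ _ (fun j => iff_sym (S_pow_K k j)) hk).
    + destruct pH as [h1 nh1], pK as [k1 nk1]. exists (iH h1 ** iK k1). right. split; auto.
      intros j hj [h e].
      assert (r : RW true (negb true) 2 (iH h1 ** iK k1)).
      { change true with (ltyp (LH h1)). change (iH h1) with (ev (LH h1)). apply RWc; auto.
        change (negb (ltyp (LH h1))) with (ltyp (LK k1)). apply RW1. exact nk1. }
      destruct (NS _ _ _ _ _ (RW_powCR _ _ _ _ r hj) (eq_sym e)). lia.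
Qed.

End WithU.

Lemma final2 (pH : proper H0) (pK : proper K0) n :
  OrdSet (fun x : G => exists h : H, iH h = x) n <-> (OrdSet K0 n \/ n = 0).
Proof.
  destruct u_exists as [u [hu [huH huK]]]. apply (final_iff u); auto.
Qed.


End Main.

Theorem proposition4p1 (H K : Group) (H0 : H -> Prop) (K0 : K -> Prop) (phi : H -> K)
  (G : Group) (iH : H -> G) (iK : K -> G) :
  torsion_free H -> torsion_free K ->
  is_subgroup H0 -> proper H0 -> malnormal H0 ->
  is_subgroup K0 -> proper K0 ->
  iso_between H0 K0 phi ->
  is_amalgam H0 K0 phi G iH iK ->
  forall n : nat, OrdSet (fun x : G => exists h : H, iH h = x) n <-> (OrdSet K0 n \/ n = 0).
Proof.
  intros tfH tfK sH pH mH sK pK isoP am n.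
  destruct am as [homH [homK [amal univ]]].
  eapply final2; eauto.
Qed.
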